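(* Let $M=(S,\mathrm{Act},P)$ be an MDP, $T\subseteq S$, $\mathrm{rew}\colon S\to\mathbb{R}_{\ge0}$. Define $\tilde E^{\max}\colon[0,\infty]^S\to[0,\infty]^S$ by $\tilde E^{\max}(x)(s)=E^{\max}(x)(s)$ if $\Pr^{\min}_s(\Diamond T)>0$ and $\tilde E^{\max}(x)(s)=\infty$ if $\Pr^{\min}_s(\Diamond T)=0$. Then for all $s\in S$, $(\mathrm{lfp}\,\tilde E^{\max})(s)=\mathbb{E}^{\max}_s(\Diamond T)$.
   Context: An MDP is a tuple $M=(S,\mathrm{Act},P)$ with $S$ finite, $\mathrm{Act}$ finite, $P\colon S\times\mathrm{Act}\times S\to[0,1]$ with $\sum_{s'}P(s,a,s')\in\{0,1\}$; $\mathrm{Act}(s)=\{a\mid\sum_{s'}P(s,a,s')=1\}$ is nonempty for all $s$; $\mathrm{Post}(s,a)=\{s'\mid P(s,a,s')>0\}$. A strategy is $\sigma\colon S\to\mathrm{Act}$ with $\sigma(s)\in\mathrm{Act}(s)$, inducing a Markov chain with transitions $P(s,\sigma(s),\cdot)$; $\Pr^\sigma_s(\Diamond T)$ is the probability of visiting $T$ from $s$ and $\Pr^{\min}_s(\Diamond T)=\min_\sigma\Pr^\sigma_s(\Diamond T)$. For an infinite path $s_0s_1\ldots$, the accumulated reward is $\sum_{k=0}^{n-1}\mathrm{rew}(s_k)$ with $n=\min\{i\mid s_i\in T\}$ if $T$ is visited, and $\infty$ otherwise; $\mathbb{E}^\sigma_s(\Diamond T)$ is its expectation under $\sigma$ from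 $s$, and $\mathbb{E}^{\max}_s(\Diamond T)=\max_\sigma\mathbb{E}^\sigma_s(\Diamond T)$. $E^{\max}(x)(s)=0$ for $s\in T$ and $\mathrm{rew}(s)+\max_{a\in\mathrm{Act}(s)}\sum_{s'\in\mathrm{Post}(s,a)}P(s,a,s')x(s')$ for $s\notin T$, with $p\cdot\infty=\infty$ for $p>0$, $a+\infty=\infty$. The least fixed point is taken w.r.t. the pointwise order on $[0,\infty]^S$. *)

(* Defs.v *)
(* Values in [0,oo] are modelled in \bar R. *)
From HB Require Import structures.
From mathcomp Require Import all_boot all_order all_algebra.
From mathcomp Require Import all_classical all_reals all_analysis.
Set Implicit Arguments.
Unset Strict Implicit.
Unset Printing Implicit Defensive.
Import Order.TTheory GRing.Theory Num.Theory.
Local Open Scope ring_scope.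

Section MDP.
Variables (R : realType) (S A : finType).
Variable P : S -> A -> S -> R.

Definition is_mdp : Prop :=
  [/\ (forall s a s', 0 <= P s a s' <= 1),
      (forall s a, \sum_(s' : S) P s a s' = 0 \/ \sum_(s' : S) P s a s' = 1)
    & (forall s, exists a, \sum_(s' : S) P s a s' = 1)].

Definition Act (s : S) : pred A := [pred a | \sum_(s' : S) P s a s' == 1].
Definition Post (s : S) (a : A) : pred S := [pred s' | 0 < P s a s'].

(* memoryless deterministic strategies sigma : S -> Act with sigma s in Act(s) *)
Definition is_strat (sigma : {ffun S -> A}) : bool := [forall s, sigma s \in Act s].

Variable T : {set S}.
Variable rew : S -> R.

Definition first_hit_path (n : nat) (s : S) (p : {ffun 'I_n.+1 -> S}) : bool :=
  [&& p ord0 == s, p ord_max \in T &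
      [forall i : 'I_n, p (widen_ord (leqnSn n) i) \notin T]].

Definition path_prob (sigma : {ffun S -> A}) (n : nat) (p : {ffun 'I_n.+1 -> S}) : R :=
  \prod_(i < n) P (p (widen_ord (leqnSn n) i)) (sigma (p (widen_ord (leqnSn n) i)))
                  (p (lift ord0 i)).

Definition path_rew (n : nat) (p : {ffun 'I_n.+1 -> S}) : R :=
  \sum_(i < n) rew (p (widen_ord (leqnSn n) i)).

Local Open Scope ereal_scope.

(* Pr^sigma_s(<> T): the event <>T is the disjoint union of the cylinders of the
   first-hit paths, so its probability is the (countable) sum of their probabilities *)
Definition PrReach (sigma : {ffun S -> A}) (s : S) : \bar R :=
  \sum_(n <oo) (\sum_(p : {ffun 'I_n.+1 -> S} | first_hit_path s p)
                  path_prob sigma p)%R%:E.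

(* E^sigma_s(<> T): the accumulated reward is constant (= path_rew p) on the
   cylinder of each first-hit path p and equals +oo on the complement of <>T,
   which has probability 1 - Pr^sigma_s(<>T); with 0 * oo = 0 and p * oo = oo (p>0). *)
Definition ExpRew (sigma : {ffun S -> A}) (s : S) : \bar R :=
  \sum_(n <oo) (\sum_(p : {ffun 'I_n.+1 -> S} | first_hit_path s p)
                  path_prob sigma p * path_rew p)%R%:E
  + (1 - PrReach sigma s) * +oo.

Definition PrMin (s : S) : \bar R :=
  \big[mine/+oo]_(sigma : {ffun S -> A} | is_strat sigma) PrReach sigma s.

Definition EMax (s : S) : \bar R :=
  \big[maxe/-oo]_(sigma : {ffun S -> A} | is_strat sigma) ExpRew sigma s.

Definition Emax_op (x : S -> \bar R) (s : S) : \bar R :=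
  if s \in T then 0
  else (rew s)%:E +
       \big[maxe/-oo]_(a | a \in Act s)
          \sum_(s' | s' \in Post s a) (P s a s')%:E * x s'.

Definition Etilde_op (x : S -> \bar R) (s : S) : \bar R :=
  if 0 < PrMin s then Emax_op x s else +oo.

End MDP.

Definition is_lfp (R : realType) (S : finType) (F : (S -> \bar R) -> (S -> \bar R))
  (x : S -> \bar R) : Prop :=
  [/\ (forall s, (0 <= x s)%E), F x = x &
      forall y : S -> \bar R, (forall s, (0 <= y s)%E) -> F y = y ->
        forall s, (x s <= y s)%E].

(* Main.v *)
Set Warnings "-notation-overridden -ambiguous-paths -notation-incompatible-prefix".
Require Import Defs.
From HB Require Import structures.
From mathcomp Require Import all_boot all_order all_algebra.
From mathcomp Require Import all_classical all_reals all_analysis.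
From mathcomp Require Import ring lra.
Import Order.TTheory GRing.Theory Num.Theory.
Set Implicit Arguments.
Unset Strict Implicit.
Unset Printing Implicit Defensive.
Local Open Scope classical_set_scope.
Local Open Scope ring_scope.

Section Dev.
Variables (R : realType) (S A : finType) (P : S -> A -> S -> R) (T : {set S}) (rew : S -> R).
Hypothesis HP : is_mdp P.
Hypothesis Hrew : forall s, 0 <= rew s.

Lemma P_ge0 s a t : 0 <= P s a t.
Proof. by case: HP => H _ _; case/andP: (H s a t). Qed.

Lemma eq_ler_sub (x y : R) : x <= y -> 0 <= y - x.
Proof. by rewrite subr_ge0. Qed.

Lemma avg_le (I : finType) (D : pred I) (w f : I -> R) (m : R) :
  (forall i, D i -> 0 < w i) -> \sum_(i | D i) w i = 1 ->
  (forall i, D i -> f i <= m) -> m <= \sum_(i | D i) w i * f i ->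
  forall i, D i -> f i = m.
Proof.
move=> w0 w1 fm H.
have H2 : \sum_(i | D i) w i * (m - f i) = 0.
  apply/eqP; rewrite eq_le; apply/andP; split; last first.
    by apply: sumr_ge0 => i Di; rewrite mulr_ge0 ?subr_ge0 ?fm // ltW ?w0.
  under eq_bigr => i _ do rewrite mulrBr.
  by rewrite sumrB -big_distrl /= w1 mul1r subr_le0.
move=> i Di.
have /eqP := @psumr_eq0P _ _ _ _ (fun j Dj => mulr_ge0 (ltW (w0 j Dj)) (eq_ler_sub (fm j Dj))) H2 i Di.
rewrite mulf_eq0 subr_eq0 => /orP[/eqP w0i|/eqP //].
by have := w0 i Di; rewrite w0i ltxx.
Qed.

Lemma avg_ge (I : finType) (D : pred I) (w f : I -> R) (m : R) :
  (forall i, D i -> 0 < w i) -> \sum_(i | D i) w i = 1 ->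
  (forall i, D i -> m <= f i) -> \sum_(i | D i) w i * f i <= m ->
  forall i, D i -> f i = m.
Proof.
move=> w0 w1 fm H i Di; apply: oppr_inj.
apply: (@avg_le I D w (fun i => - f i) (- m)) => //.
- by move=> j Dj; rewrite lerN2 fm.
- by rewrite -(lerN2) -sumrN opprK; under eq_bigr => j _ do rewrite mulrN opprK.
Qed.

Lemma sum_Post (s : S) (a : A) (F : S -> R) :
  \sum_t P s a t * F t = \sum_(t | t \in Post P s a) P s a t * F t.
Proof.
rewrite [RHS]big_mkcond /=; apply: eq_bigr => t _; rewrite inE.
case: ifP => // /negbT; rewrite -leNgt => H.
have -> : P s a t = 0 by apply/eqP; rewrite eq_le H P_ge0.
by rewrite mul0r.
Qed.

Lemma sum_Post1 (s : S) (a : A) : a \in Act P s -> \sum_(t | t \in Post P s a) P s a t = 1.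
Proof.
rewrite inE => /eqP H.
transitivity (\sum_(t | t \in Post P s a) P s a t * 1); first by apply: eq_bigr => t _; rewrite mulr1.
rewrite -(sum_Post s a (fun _ => 1)); under eq_bigr do rewrite mulr1; exact: H.
Qed.

Lemma sum_PostE (s : S) (a : A) (F : S -> \bar R) :
  (\sum_t (P s a t)%:E * F t = \sum_(t | t \in Post P s a) (P s a t)%:E * F t)%E.
Proof.
rewrite [RHS]big_mkcond /=; apply: eq_bigr => t _; rewrite inE.
case: ifP => // /negbT; rewrite -leNgt => H.
have -> : P s a t = 0 by apply/eqP; rewrite eq_le H P_ge0.
by rewrite mul0e.
Qed.

Section Strat.
Variable sg : {ffun S -> A}.

Fixpoint pp (n : nat) (s : S) : R :=
  match n with
  | 0 => if s \in T then 1 else 0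
  | n.+1 => if s \in T then 0 else \sum_t P s (sg s) t * pp n t
  end.

Fixpoint rr (n : nat) (s : S) : R :=
  match n with
  | 0 => 0
  | n.+1 => if s \in T then 0 else \sum_t P s (sg s) t * (rr n t + rew s * pp n t)
  end.

Definition prep n (s : S) (tl : {ffun 'I_n.+1 -> S}) : {ffun 'I_n.+2 -> S} :=
  [ffun i => match unlift ord0 i with Some j => tl j | None => s end].
Definition tail n (p : {ffun 'I_n.+2 -> S}) : {ffun 'I_n.+1 -> S} :=
  [ffun j => p (lift ord0 j)].

Lemma prep0 n s tl : @prep n s tl ord0 = s.
Proof. by rewrite ffunE unlift_none. Qed.
Lemma prepS n s tl j : @prep n s tl (lift ord0 j) = tl j.
Proof. by rewrite ffunE liftK. Qed.
Lemma tail_prep n s tl : tail (@prep n s tl) = tl.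
Proof. by apply/ffunP => j; rewrite ffunE prepS. Qed.
Lemma prep_tail n (p : {ffun 'I_n.+2 -> S}) : prep (p ord0) (tail p) = p.
Proof.
apply/ffunP => i; rewrite ffunE.
case: unliftP => [j ->|->] //; by rewrite ffunE.
Qed.

Lemma widen_lift n (j : 'I_n) :
  widen_ord (leqnSn n.+1) (lift ord0 j) = lift ord0 (widen_ord (leqnSn n) j).
Proof. by apply: val_inj. Qed.

Lemma ordmax_lift n : (ord_max : 'I_n.+2) = lift ord0 (ord_max : 'I_n.+1).
Proof. by apply: val_inj. Qed.

Lemma fh_prep n s tl :
  first_hit_path T s (@prep n s tl) =
  (s \notin T) && first_hit_path T (tl ord0) tl.
Proof.
rewrite /first_hit_path prep0 eqxx ordmax_lift prepS /= eqxx /=.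
have -> : [forall i : 'I_n.+1, prep s tl (widen_ord (leqnSn n.+1) i) \notin T] =
  (s \notin T) && [forall i : 'I_n, tl (widen_ord (leqnSn n) i) \notin T].
  apply/forallP/andP => [H|[H1 /forallP H2] i].
    split; first by have := H ord0; rewrite (_ : widen_ord _ _ = ord0) ?prep0 //; apply: val_inj.
    by apply/forallP => j; have := H (lift ord0 j); rewrite widen_lift prepS.
  case: (unliftP ord0 i) => [j ->|->].
    by rewrite widen_lift prepS.
  by rewrite (_ : widen_ord _ _ = ord0) ?prep0 //; apply: val_inj.
by case: (s \in T); case: (_ \in T).
Qed.

Lemma pprob_prep n s tl :
  path_prob P sg (@prep n s tl) = P s (sg s) (tl ord0) * path_prob P sg tl.
Proof.
rewrite /path_prob big_ord_recl.
rewrite (_ : widen_ord _ ord0 = ord0); last by apply: val_inj.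
rewrite prep0 prepS.
congr (_ * _); apply: eq_bigr => j _.
by rewrite widen_lift !prepS.
Qed.

Lemma prew_prep n s tl :
  path_rew rew (@prep n s tl) = rew s + path_rew rew tl.
Proof.
rewrite /path_rew big_ord_recl.
rewrite (_ : widen_ord _ ord0 = ord0); last by apply: val_inj.
rewrite prep0; congr (_ + _); apply: eq_bigr => j _.
by rewrite widen_lift !prepS.
Qed.


Lemma fh0 s (p : {ffun 'I_1 -> S}) :
  first_hit_path T s p = (p == [ffun=> s]) && (s \in T).
Proof.
rewrite /first_hit_path.
have -> : [forall i : 'I_0, p (widen_ord (leqnSn 0) i) \notin T] = true.
  by apply/forallP => -[].
rewrite andbT (_ : ord_max = ord0) //; last by apply: val_inj.
apply/andP/andP => [[/eqP H1 H2]|[/eqP -> H]]; last by rewrite ffunE.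
split => //; last by rewrite -H1.
by apply/eqP/ffunP => i; rewrite ffunE (ord1 i).
Qed.

Lemma fh_split n s (F : {ffun 'I_n.+1 -> S} -> R) :
  \sum_(p : {ffun 'I_n.+2 -> S} | first_hit_path T s p)
     P s (sg s) (p (lift ord0 ord0)) * F (tail p) =
  if s \in T then 0 else
  \sum_t P s (sg s) t * \sum_(tl | first_hit_path T t tl) F tl.
Proof.
rewrite (reindex_onto (prep s) (@tail n)); last first.
  by move=> p /andP[/eqP <- _]; rewrite prep_tail.
under eq_bigl => tl do rewrite fh_prep tail_prep eqxx andbT.
case: (boolP (s \in T)) => sT /=; first by rewrite big_pred0.
rewrite (partition_big (fun tl : {ffun 'I_n.+1 -> S} => tl ord0) predT) //=.
apply: eq_bigr => t _; rewrite big_distrr /=.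
apply: eq_big => tl.
  rewrite /first_hit_path; apply/andP/idP => [[/andP[_ H] /eqP <-]|/andP[/eqP <- H]].
    by rewrite eqxx H.
  by rewrite eqxx H.
by move=> /andP[_ /eqP <-]; rewrite prepS tail_prep.
Qed.

Lemma psum_pp n s :
  \sum_(p : {ffun 'I_n.+1 -> S} | first_hit_path T s p) path_prob P sg p = pp n s.
Proof.
elim: n s => [|n IH] s.
  under eq_bigl => p do rewrite fh0.
  case: (boolP (s \in T)) => sT /=; last by rewrite (negbTE sT) big_pred0 // => p; rewrite andbF.
  rewrite sT (big_pred1 [ffun=> s]) ?/path_prob ?big_ord0 // => p; by rewrite andbT.
rewrite /=.
have -> : \sum_(p : {ffun 'I_n.+2 -> S} | first_hit_path T s p) path_prob P sg p =
  \sum_(p : {ffun 'I_n.+2 -> S} | first_hit_path T s p)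
     P s (sg s) (p (lift ord0 ord0)) * path_prob P sg (tail p).
  apply: eq_bigr => p /andP[/eqP H _].
  by rewrite -{1}(prep_tail p) pprob_prep H ffunE.
rewrite fh_split; case: (s \in T) => //.
by apply: eq_bigr => t _; rewrite IH.
Qed.

Lemma psum_rr n s :
  \sum_(p : {ffun 'I_n.+1 -> S} | first_hit_path T s p)
     path_prob P sg p * path_rew rew p = rr n s.
Proof.
elim: n s => [|n IH] s.
  by rewrite /= big1 // => p _; rewrite /path_rew big_ord0 mulr0.
rewrite /=.
have -> : \sum_(p : {ffun 'I_n.+2 -> S} | first_hit_path T s p)
     path_prob P sg p * path_rew rew p =
  \sum_(p : {ffun 'I_n.+2 -> S} | first_hit_path T s p)
     P s (sg s) (p (lift ord0 ord0)) *
     (path_prob P sg (tail p) * path_rew rew (tail p) + rew s * path_prob P sg (tail p)).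
  apply: eq_bigr => p /andP[/eqP H _].
  rewrite -{1 2}(prep_tail p) pprob_prep prew_prep H ffunE; ring.
rewrite (@fh_split n s (fun tl => path_prob P sg tl * path_rew rew tl + rew s * path_prob P sg tl)); case: (s \in T) => //.
apply: eq_bigr => t _; rewrite big_split /= -big_distrr /= IH psum_pp //.
Qed.

Hypothesis Hsg : is_strat P sg.

Lemma sumP1 s : \sum_t P s (sg s) t = 1.
Proof. by have := forallP Hsg s; rewrite inE => /eqP. Qed.

Lemma pp_ge0 n s : 0 <= pp n s.
Proof.
elim: n s => [|n IH] s /=; first by case: (s \in T).
case: (s \in T) => //; apply: sumr_ge0 => t _; by rewrite mulr_ge0 ?P_ge0.
Qed.

Lemma rr_ge0 n s : 0 <= rr n s.
Proof.
elim: n s => [|n IH] s //=.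
case: (s \in T) => //; apply: sumr_ge0 => t _.
by rewrite mulr_ge0 ?P_ge0 // addr_ge0 // mulr_ge0 // pp_ge0.
Qed.

Definition Q n s := \sum_(k < n) pp k s.
Definition RR n s := \sum_(k < n) rr k s.

Lemma Q0 s : Q 0 s = 0. Proof. by rewrite /Q big_ord0. Qed.
Lemma RR0 s : RR 0 s = 0. Proof. by rewrite /RR big_ord0. Qed.

Lemma Q_rec n s : Q n.+1 s = if s \in T then 1 else \sum_t P s (sg s) t * Q n t.
Proof.
rewrite /Q big_ord_recl /=; case: (s \in T).
  by rewrite big1 ?addr0.
rewrite add0r exchange_big /=; apply: eq_bigr => t _; by rewrite big_distrr.
Qed.

Lemma RR_rec n s : RR n.+1 s =
  if s \in T then 0 else \sum_t P s (sg s) t * (RR n t + rew s * Q n t).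
Proof.
rewrite /RR big_ord_recl /=; case: (s \in T).
  by rewrite big1 ?addr0.
rewrite add0r exchange_big /=; apply: eq_bigr => t _.
rewrite -big_distrr /=; congr (_ * _).
by rewrite /Q big_distrr -big_split.
Qed.

Lemma Q_ge0 n s : 0 <= Q n s.
Proof. by apply: sumr_ge0 => k _; apply: pp_ge0. Qed.
Lemma RR_ge0 n s : 0 <= RR n s.
Proof. by apply: sumr_ge0 => k _; apply: rr_ge0. Qed.

Lemma Q_le1 n s : Q n s <= 1.
Proof.
elim: n s => [|n IH] s; first by rewrite Q0.
rewrite Q_rec; case: (s \in T) => //.
rewrite -(sumP1 s); apply: ler_sum => t _.
by rewrite ler_piMr ?P_ge0.
Qed.

Lemma Q_mono s : {homo (fun n => Q n s) : n m / (n <= m)%N >-> n <= m}.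
Proof.
move=> n m nm /=; rewrite /Q -(subnKC nm) big_split_ord /= lerDl.
by apply: sumr_ge0 => k _; apply: pp_ge0.
Qed.

Lemma RR_mono s : {homo (fun n => RR n s) : n m / (n <= m)%N >-> n <= m}.
Proof.
move=> n m nm /=; rewrite /RR -(subnKC nm) big_split_ord /= lerDl.
by apply: sumr_ge0 => k _; apply: rr_ge0.
Qed.

Local Open Scope ereal_scope.

Definition Pe s : \bar R := ereal_sup (range (fun n => (Q n s)%:E)).
Definition Re s : \bar R := ereal_sup (range (fun n => (RR n s)%:E)).

Lemma cvgQ s : (fun n => (Q n s)%:E) @ \oo --> Pe s.
Proof. by apply: ereal_nondecreasing_cvgn => n m nm; rewrite lee_fin Q_mono. Qed.
Lemma cvgRR s : (fun n => (RR n s)%:E) @ \oo --> Re s.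
Proof. by apply: ereal_nondecreasing_cvgn => n m nm; rewrite lee_fin RR_mono. Qed.

Lemma PrReachE s : PrReach P T sg s = Pe s.
Proof.
rewrite /PrReach (eq_eseriesr (g := fun n => (pp n s)%:E)); last by move=> n _; rewrite psum_pp.
apply: cvg_lim => //.
have -> : (fun n => \sum_(0 <= i < n) (pp i s)%:E) = (fun n => (Q n s)%:E).
  by apply: funext => n; rewrite sumEFin big_mkord.
exact: cvgQ.
Qed.

Lemma ExpRewE s : ExpRew P T rew sg s = Re s + (1 - Pe s) * +oo.
Proof.
rewrite /ExpRew PrReachE; congr (_ + _).
rewrite (eq_eseriesr (g := fun n => (rr n s)%:E)); last by move=> n _; rewrite psum_rr.
apply: cvg_lim => //.
have -> : (fun n => \sum_(0 <= i < n) (rr i s)%:E) = (fun n => (RR n s)%:E).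
  by apply: funext => n; rewrite sumEFin big_mkord.
exact: cvgRR.
Qed.

Lemma Q_le_Pe n s : (Q n s)%:E <= Pe s.
Proof. by apply: le_ereal_sup_tmp; exists (Q n s)%:E. Qed.
Lemma RR_le_Re n s : (RR n s)%:E <= Re s.
Proof. by apply: le_ereal_sup_tmp; exists (RR n s)%:E. Qed.

Lemma Pe_ge0 s : 0 <= Pe s.
Proof. by apply: le_trans (Q_le_Pe 0 s); rewrite lee_fin Q_ge0. Qed.
Lemma Re_ge0 s : 0 <= Re s.
Proof. by apply: le_trans (RR_le_Re 0 s); rewrite lee_fin RR_ge0. Qed.
Lemma Pe_le1 s : Pe s <= 1.
Proof. by apply: ge_ereal_sup => _ [n _ <-]; rewrite lee_fin Q_le1. Qed.
Lemma Pe_fin s : Pe s \is a fin_num.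
Proof. by rewrite ge0_fin_numE ?Pe_ge0 // (le_lt_trans (Pe_le1 s)) // ltry. Qed.

Definition Prr s : R := fine (Pe s).
Lemma PeE s : Pe s = (Prr s)%:E.
Proof. by rewrite /Prr fineK ?Pe_fin. Qed.
Lemma Prr_ge0 s : (0 <= Prr s)%R.
Proof. by rewrite -lee_fin -PeE Pe_ge0. Qed.
Lemma Prr_le1 s : (Prr s <= 1)%R.
Proof. by rewrite -lee_fin -PeE Pe_le1. Qed.
Lemma Q_le_Prr n s : (Q n s <= Prr s)%R.
Proof. by rewrite -lee_fin -PeE Q_le_Pe. Qed.

Lemma lim_eq (f : nat -> \bar R) (a b : \bar R) : f n @[n --> \oo] --> a -> f n @[n --> \oo] --> b -> a = b.
Proof.
move=> Ha Hb; rewrite -(cvg_lim (@ereal_hausdorff R) Ha).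
exact: (cvg_lim (@ereal_hausdorff R) Hb).
Qed.

Lemma Pe_rec s : Pe s = if s \in T then 1 else \sum_t (P s (sg s) t)%:E * Pe t.
Proof.
have H1 : (fun n => (Q n.+1 s)%:E) @ \oo --> Pe s.
  by rewrite (cvg_shiftS (fun n => (Q n s)%:E)); apply: cvgQ.
case: (boolP (s \in T)) => sT.
  apply: (lim_eq H1); under eq_fun => n do rewrite Q_rec sT.
  exact: cvg_cst.
apply: (lim_eq H1).
under eq_fun => n do rewrite Q_rec (negbTE sT) -sumEFin.
apply: cvg_nnesum => t _.
  by near=> n; rewrite lee_fin mulr_ge0 ?P_ge0 ?Q_ge0.
under eq_fun => n do rewrite EFinM.
apply: cvgeZl => //; exact: cvgQ.
Unshelve. all: by end_near.
Qed.

Lemma Prr_rec s : Prr s = if s \in T then 1%R else (\sum_t P s (sg s) t * Prr t)%R.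
Proof.
apply/EFin_inj; rewrite -PeE Pe_rec; case: (s \in T) => //.
by rewrite -sumEFin; apply: eq_bigr => t _; rewrite PeE EFinM.
Qed.

Lemma Re_rec s : s \notin T ->
  Re s = \sum_t (P s (sg s) t)%:E * (Re t + (rew s * Prr t)%:E).
Proof.
move=> sT.
have H1 : (fun n => (RR n.+1 s)%:E) @ \oo --> Re s.
  by rewrite (cvg_shiftS (fun n => (RR n s)%:E)); apply: cvgRR.
apply: (lim_eq H1).
under eq_fun => n do rewrite RR_rec (negbTE sT) -sumEFin.
apply: cvg_nnesum => t _.
  by near=> n; rewrite lee_fin mulr_ge0 ?P_ge0 ?addr_ge0 ?mulr_ge0 ?RR_ge0 ?Q_ge0.
under eq_fun => n do rewrite EFinM EFinD.
apply: cvgeZl => //; apply: cvgeD.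
- by apply: ge0_adde_def; rewrite inE ?Re_ge0 // lee_fin mulr_ge0 ?Prr_ge0.
- exact: cvgRR.
under eq_fun => n do rewrite EFinM.
rewrite EFinM; apply: cvgeZl => //; rewrite -PeE; exact: cvgQ.
Unshelve. all: by end_near.
Qed.

Lemma Post_gt0 s t : t \in Post P s (sg s) -> (0 < P s (sg s) t)%R.
Proof. by rewrite inE. Qed.

Lemma Prr_T s : s \in T -> Prr s = 1%R.
Proof. by move=> sT; rewrite Prr_rec sT. Qed.

Lemma Prr_recP s : s \notin T -> Prr s = (\sum_(t | t \in Post P s (sg s)) P s (sg s) t * Prr t)%R.
Proof. by move=> sT; rewrite Prr_rec (negbTE sT) sum_Post. Qed.



Lemma Prr_succ1 s t : s \notin T -> Prr s = 1%R -> (0 < P s (sg s) t)%R -> Prr t = 1%R.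
Proof.
move=> sT H1 Pt.
have Hs : sg s \in Act P s by have := forallP Hsg s.
apply: (@avg_le S (Post P s (sg s)) (P s (sg s)) Prr 1%R (fun i Hi => @Post_gt0 s i Hi) (sum_Post1 Hs) (fun i _ => Prr_le1 i)).
  by rewrite -Prr_recP // H1.
exact: Pt.
Qed.

Lemma closed_zero (M : pred S) :
  (forall t, M t -> t \notin T) ->
  (forall t t', M t -> (0 < P t (sg t) t')%R -> M t') ->
  forall t, M t -> Prr t = 0%R.
Proof.
move=> MT Mcl.
have Hpp n t : M t -> pp n t = 0%R.
  elim: n t => [|n IH] t Mt /=; first by rewrite (negbTE (MT t Mt)).
  rewrite (negbTE (MT t Mt)) big1 // => t' _.
  case: (ltP 0%R (P t (sg t) t')) => [Pt|Pt].
    by rewrite IH ?mulr0 //; apply: Mcl Pt.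
  have -> : P t (sg t) t' = 0%R by apply/eqP; rewrite eq_le Pt P_ge0.
  by rewrite mul0r.
move=> t Mt; apply/eqP; rewrite eq_le Prr_ge0 andbT -lee_fin -PeE.
apply: ge_ereal_sup => _ [n _ <-]; rewrite lee_fin /Q big1 // => k _.
by rewrite Hpp.
Qed.

Lemma Re_T s : s \in T -> Re s = 0.
Proof.
move=> sT; apply/eqP; rewrite eq_le Re_ge0 andbT.
apply: ge_ereal_sup => _ [[|n] _ <-]; by rewrite ?RR0 ?RR_rec ?sT.
Qed.

Lemma ExpRew_lt1 s : (Prr s < 1)%R -> ExpRew P T rew sg s = +oo.
Proof.
move=> H; rewrite ExpRewE PeE -EFinB gt0_muley ?lte_fin ?subr_gt0 //.
by rewrite addey // gt_eqF // (lt_le_trans _ (Re_ge0 s)) ?ltNy0.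
Qed.

Lemma ExpRew_eq1 s : Prr s = 1%R -> ExpRew P T rew sg s = Re s.
Proof. by move=> H; rewrite ExpRewE PeE H subee // mul0e adde0. Qed.

Lemma ExpRew_ge0 s : 0 <= ExpRew P T rew sg s.
Proof.
case: (ltP (Prr s) 1%R) => H; first by rewrite ExpRew_lt1.
have H1 : Prr s = 1%R by apply/eqP; rewrite eq_le Prr_le1.
by rewrite ExpRew_eq1 // Re_ge0.
Qed.

Lemma ExpRew_T s : s \in T -> ExpRew P T rew sg s = 0.
Proof. by move=> sT; rewrite ExpRew_eq1 ?Prr_T // Re_T. Qed.

Lemma ExpRew_fin s : ExpRew P T rew sg s < +oo -> Prr s = 1%R.
Proof.
move=> H; case: (ltP (Prr s) 1%R) => H1; first by rewrite ExpRew_lt1 // ltxx in H.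
by apply/eqP; rewrite eq_le Prr_le1.
Qed.

Lemma ExpRew_step s : s \notin T ->
  ExpRew P T rew sg s = (rew s)%:E +
    \sum_(t | t \in Post P s (sg s)) (P s (sg s) t)%:E * ExpRew P T rew sg t.
Proof.
move=> sT; have Hs : sg s \in Act P s by have := forallP Hsg s.
case: (ltP (Prr s) 1%R) => H.
  rewrite ExpRew_lt1 //.
  case: (pickP [pred t | (t \in Post P s (sg s)) && (Prr t < 1)%R]) => [t /andP[Pt Ht]|Hn].
    rewrite (bigD1 t) //= ExpRew_lt1 // muleC gt0_mulye ?lte_fin ?Post_gt0 //.
    rewrite addye ?addey //.
    by rewrite gt_eqF // (lt_le_trans _ (sume_ge0 _ _)) ?ltNy0 // => t' _; rewrite mule_ge0 ?lee_fin ?P_ge0 ?ExpRew_ge0.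
  exfalso; move: H; rewrite Prr_recP // (eq_bigr (fun t => P s (sg s) t * 1)%R).
    by rewrite -(sum_Post s (sg s) (fun _ => 1%R)) sum_Post; under eq_bigr do rewrite mulr1; rewrite sum_Post1 // ltxx.
  move=> t Pt; have := Hn t; rewrite /= Pt /= => /negbT; rewrite -leNgt => Ht.
  by have -> : Prr t = 1%R by apply/eqP; rewrite eq_le Prr_le1.
have H1 : Prr s = 1%R by apply/eqP; rewrite eq_le Prr_le1.
rewrite ExpRew_eq1 // Re_rec // sum_PostE.
transitivity (\sum_(t | t \in Post P s (sg s)) ((P s (sg s) t)%:E * ExpRew P T rew sg t + (P s (sg s) t * rew s)%:E)).
  apply: eq_bigr => t Pt; have Ht := Prr_succ1 sT H1 (Post_gt0 Pt).
  rewrite Ht mulr1 ExpRew_eq1 // muleDr //; last by apply: ge0_adde_def; rewrite inE ?Re_ge0 ?lee_fin.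
rewrite big_split /= addeC sumEFin -big_distrl /= sum_Post1 // mul1r.
by [].
Qed.

Definition Lop (x : S -> R) : S -> R :=
  fun t => if t \in T then 0%R else (\sum_t' P t (sg t) t' * x t')%R.

Lemma Lop_mono x y : (forall t, x t <= y t)%R -> forall t, (Lop x t <= Lop y t)%R.
Proof.
move=> H t; rewrite /Lop; case: (t \in T) => //.
by apply: ler_sum => t' _; apply: ler_wpM2l; rewrite ?P_ge0.
Qed.

Lemma Lop_addc c x : (0 <= c)%R -> forall t, (Lop (fun t => c + x t) t <= c + Lop x t)%R.
Proof.
move=> c0 t; rewrite /Lop; case: (t \in T); first by rewrite addr0.
under eq_bigr do rewrite mulrDr; rewrite big_split /= -big_distrl /= sumP1 mul1r //.
Qed.

Lemma Lop_scale c x t : Lop (fun t => c * x t)%R t = (c * Lop x t)%R.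
Proof.
rewrite /Lop; case: (t \in T); first by rewrite mulr0.
by rewrite big_distrr /=; apply: eq_bigr => t' _; rewrite mulrCA.
Qed.

Lemma iter_scale j c x t : iter j Lop (fun t => c * x t)%R t = (c * iter j Lop x t)%R.
Proof.
elim: j t => [//|j IH] t /=.
have -> : iter j Lop (fun t => c * x t)%R = (fun t => c * iter j Lop x t)%R by apply: funext => t'; exact: IH.
exact: Lop_scale.
Qed.

Lemma iter_mono j x y : (forall t, x t <= y t)%R -> forall t, (iter j Lop x t <= iter j Lop y t)%R.
Proof.
move=> H; elim: j => [//|j IH] t /=; exact: Lop_mono.
Qed.

Lemma iter_loc (G : pred S) j x y :
  (forall t t', G t -> t \notin T -> (0 < P t (sg t) t')%R -> G t') ->
  (forall t, G t -> x t <= y t)%R -> forall t, G t -> (iter j Lop x t <= iter j Lop y t)%R.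
Proof.
move=> Gcl H; elim: j => [//|j IH] t Gt /=.
rewrite /Lop; case: (boolP (t \in T)) => // tT.
apply: ler_sum => t' _; case: (ltP 0%R (P t (sg t) t')) => Pt.
  by apply: ler_wpM2l; rewrite ?P_ge0 // IH // (Gcl t).
have -> : P t (sg t) t' = 0%R by apply/eqP; rewrite eq_le Pt P_ge0.
by rewrite !mul0r.
Qed.

Lemma surv_iter n t : (1 - Q n t)%R = iter n Lop (fun _ => 1%R) t.
Proof.
elim: n t => [|n IH] t /=; first by rewrite Q0 subr0.
have <- : (fun t => 1 - Q n t)%R = iter n Lop (fun _ => 1%R) by apply: funext => t'; exact: IH.
rewrite Q_rec /Lop; case: (t \in T); first by rewrite subrr.
rewrite -[in LHS](sumP1 t) -sumrB; apply: eq_bigr => t' _; by rewrite mulrBr mulr1.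
Qed.

Lemma iter0 j t : iter j Lop (fun _ => 0%R) t = 0%R.
Proof.
elim: j t => [//|j IH] t /=.
have -> : iter j Lop (fun _ => 0%R) = (fun _ => 0%R) by apply: funext => t'; exact: IH.
rewrite /Lop; case: (t \in T) => //; by rewrite big1 // => t' _; rewrite mulr0.
Qed.

Definition rm : R := (\sum_t rew t)%R.
Lemma rew_le_rm t : (rew t <= rm)%R.
Proof.
rewrite /rm (bigD1 t) //= lerDl; apply: sumr_ge0 => i _; exact: Hrew.
Qed.
Lemma rm_ge0 : (0 <= rm)%R.
Proof. by apply: sumr_ge0 => i _; exact: Hrew. Qed.

Lemma RR_step n t : (RR n.+1 t <= rew t + Lop (RR n) t)%R.
Proof.
rewrite RR_rec /Lop; case: (t \in T); first by rewrite addr0 Hrew.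
under eq_bigr do rewrite mulrDr; rewrite big_split /= addrC lerD2r.
rewrite -[X in (_ <= X)%R]mulr1 -(sumP1 t) big_distrr /=.
apply: ler_sum => t' _; rewrite mulrCA; apply: ler_wpM2l; rewrite ?P_ge0 //.
by rewrite ler_piMr ?P_ge0 ?Q_le1.
Qed.

Lemma RR_iter n j t : (RR (n + j) t <= j%:R * rm + iter j Lop (RR n) t)%R.
Proof.
elim: j t => [|j IH] t; first by rewrite addn0 mul0r add0r.
rewrite addnS; apply: (le_trans (RR_step _ _)) => /=.
have H1 : (Lop (RR (n + j)) t <= Lop (fun t => j%:R * rm + iter j Lop (RR n) t) t)%R.
  by apply: Lop_mono.
have H2 := Lop_addc (iter j Lop (RR n)) (mulr_ge0 (ler0n _ j) rm_ge0) t.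
rewrite mulrSr; have := rew_le_rm t; lra.
Qed.

Lemma Re_fin s : Prr s = 1%R -> Re s < +oo.
Proof.
move=> Hs.
pose G := [pred t | Prr t == 1%R].
have Gcl t t' : G t -> t \notin T -> (0 < P t (sg t) t')%R -> G t'.
  by rewrite !inE => /eqP Ht tT Pt; apply/eqP; apply: Prr_succ1 Pt.
have HN t : exists n, G t -> (1/2 < Q n t)%R.
  case: (boolP (G t)) => Gt; last by exists 0%N.
  have : (1/2)%:E < Pe t by rewrite PeE (eqP Gt) lte_fin; lra.
  by move/ereal_sup_gt => [_ [n _ <-]]; rewrite lte_fin => Hn; exists n.
have [Nf HNf] := choice HN.
pose N := (\max_t Nf t)%N.
have HQN t : G t -> (iter N Lop (fun _ => 1%R) t <= 1/2)%R.
  move=> Gt; rewrite -surv_iter.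
  have := HNf t Gt; have := Q_mono t (leq_bigmax t (F := Nf)) => /=; lra.
have Gs : G s by rewrite inE Hs.
have N0 : (0 < N)%N.
  rewrite lt0n; apply/eqP => N0; have := HQN s Gs; rewrite N0 /=; lra.
pose C := (2 * N%:R * rm)%R.
have C0 : (0 <= C)%R by rewrite /C !mulr_ge0 ?ler0n ?rm_ge0.
have Hb n : forall t, G t -> (RR n t <= C)%R.
  elim/ltn_ind: n => n IH t Gt.
  case: (ltnP n N) => nN.
    apply: (le_trans (RR_iter 0 n t)).
    have -> : RR 0 = (fun _ => 0%R) by apply: funext => t'; rewrite RR0.
    rewrite iter0 addr0 /C; apply: ler_wpM2r; first exact: rm_ge0.
    have : (n%:R <= N%:R :> R)%R by rewrite ler_nat ltnW.
    have : (0 <= N%:R :> R)%R by rewrite ler0n.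
    lra.
  rewrite -(subnK nN); apply: (le_trans (RR_iter _ _ _)).
  have H1 : (iter N Lop (RR (n - N)) t <= iter N Lop (fun t => C * 1)%R t)%R.
    apply: (iter_loc (G := G)) => // t' Gt'; rewrite mulr1; apply: IH => //.
    by rewrite ltn_subrL N0 (leq_trans N0 nN).
  rewrite iter_scale in H1.
  have H2 := HQN t Gt.
  have H3 : (C * iter N Lop (fun _ => 1%R) t <= C * (1/2))%R by apply: ler_wpM2l.
  have : (N%:R * rm = C / 2)%R by rewrite /C; field.
  lra.
apply: (le_lt_trans (y := C%:E)); last by rewrite ltry.
by apply: ge_ereal_sup => _ [n _ <-]; rewrite lee_fin Hb.
Qed.

Lemma ExpRew_finP s : (ExpRew P T rew sg s < +oo) = (Prr s == 1%R).
Proof.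
apply/idP/idP => [/ExpRew_fin -> //|/eqP H].
by rewrite ExpRew_eq1 // Re_fin.
Qed.

End Strat.
Local Open Scope ereal_scope.

Lemma loc_ExpRew (sg1 sg2 : {ffun S -> A}) (H : pred S) :
  (forall t, H t -> sg1 t = sg2 t) ->
  (forall t t', H t -> t \notin T -> (0 < P t (sg2 t) t')%R -> H t') ->
  forall t, H t -> ExpRew P T rew sg1 t = ExpRew P T rew sg2 t.
Proof.
move=> Heq Hcl.
have Hsum (f1 f2 : S -> R) t : H t -> t \notin T -> (forall t', H t' -> f1 t' = f2 t') ->
    (\sum_t' P t (sg1 t) t' * f1 t' = \sum_t' P t (sg2 t) t' * f2 t')%R.
  move=> Ht tT Hf; rewrite Heq //; apply: eq_bigr => t' _.
  case: (ltP 0%R (P t (sg2 t) t')) => Pt; first by rewrite Hf // (Hcl t).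
  have -> : P t (sg2 t) t' = 0%R by apply/eqP; rewrite eq_le Pt P_ge0.
  by rewrite !mul0r.
have Hpp n t : H t -> pp sg1 n t = pp sg2 n t.
  elim: n t => [//|n IH] t Ht /=; case: (boolP (t \in T)) => // tT.
  by apply: Hsum.
have Hrr n t : H t -> rr sg1 n t = rr sg2 n t.
  elim: n t => [//|n IH] t Ht /=; case: (boolP (t \in T)) => // tT.
  rewrite Heq //; apply: eq_bigr => t' _.
  case: (ltP 0%R (P t (sg2 t) t')) => Pt; first by rewrite IH ?Hpp // (Hcl t).
  have -> : P t (sg2 t) t' = 0%R by apply/eqP; rewrite eq_le Pt P_ge0.
  by rewrite !mul0r.
move=> t Ht; rewrite !ExpRewE /Pe /Re /Q /RR.
have -> : (fun n => (\sum_(k < n) pp sg1 k t)%:E) = (fun n => (\sum_(k < n) pp sg2 k t)%:E).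
  by apply: funext => n; congr EFin; apply: eq_bigr => k _; rewrite Hpp.
have -> : (fun n => (\sum_(k < n) rr sg1 k t)%:E) = (fun n => (\sum_(k < n) rr sg2 k t)%:E).
  by apply: funext => n; congr EFin; apply: eq_bigr => k _; rewrite Hrr.
by [].
Qed.

Lemma switch_lt1 (sg sg' : {ffun S -> A}) : is_strat P sg -> is_strat P sg' ->
  (forall t, (Prr sg t < 1)%R -> sg' t = sg t) ->
  forall t, (Prr sg t < 1)%R -> (Prr sg' t < 1)%R.
Proof.
move=> Hsg Hsg' Heq t0 Ht0; rewrite ltNge; apply/negP => H0.
have H0' : Prr sg' t0 = 1%R by apply/eqP; rewrite eq_le H0 Prr_le1.
pose X := [pred x | (Prr sg x < 1)%R && (Prr sg' x == 1%R)].
have Xt0 : X t0 by rewrite inE Ht0 H0' eqxx.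
case: (arg_minP (Prr sg) Xt0) => x0 /andP[Hx0 Hx0'] Hmin.
pose m := Prr sg x0.
pose M := [pred x | X x && (Prr sg x == m)].
have MT x : M x -> x \notin T.
  case/andP=> /andP[H1 _] _; apply/negP => xT; move: H1; by rewrite Prr_T // ltxx.
have Mcl x x' : M x -> (0 < P x (sg' x) x')%R -> M x'.
  move=> Mx Px'; have xT := MT x Mx.
  case/andP: Mx => /andP[H1 /eqP H2] /eqP H3.
  rewrite (Heq x H1) in Px'.
  have Hs : sg x \in Act P x by have := forallP Hsg x.
  have Hsucc y : (0 < P x (sg x) y)%R -> Prr sg' y = 1%R.
    by move=> Py; apply: (Prr_succ1 Hsg' xT H2); rewrite Heq.
  have Hge y : y \in Post P x (sg x) -> (m <= Prr sg y)%R.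
    move=> Py; case: (ltP (Prr sg y) 1%R) => Hy.
      by apply: Hmin; rewrite inE Hy Hsucc ?eqxx //; exact: Py.
    by apply: le_trans Hy; apply: ltW.
  have := @avg_ge S (Post P x (sg x)) (P x (sg x)) (Prr sg) m (fun i Hi => @Post_gt0 sg x i Hi) (sum_Post1 Hs) Hge.
  rewrite -(Prr_recP Hsg xT) H3 lexx => /(_ isT x' Px') Hx'.
  apply/andP; split; last by rewrite Hx'.
  by rewrite inE Hx' Hsucc // eqxx andbT.
have := closed_zero Hsg' MT Mcl.
have Mx0 : M x0 by rewrite !inE /= Hx0 Hx0' eqxx.
move=> /(_ x0 Mx0); rewrite (eqP Hx0') => /eqP; by rewrite oner_eq0.
Qed.

Lemma ExpRew_succ (sg : {ffun S -> A}) x y : is_strat P sg -> x \notin T ->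
  ExpRew P T rew sg x < +oo -> y \in Post P x (sg x) -> ExpRew P T rew sg y < +oo.
Proof.
move=> Hsg xT Hx Py; case: (ltP (ExpRew P T rew sg y) +oo) => // Hy.
have Hy' : ExpRew P T rew sg y = +oo by apply/eqP; rewrite eq_le leey Hy.
move: Hx; rewrite ExpRew_step // (bigD1 y) //= Hy' muleC gt0_mulye ?lte_fin ?(Post_gt0 Py) //.
rewrite addye ?addey ?ltxx //.
rewrite gt_eqF // (lt_le_trans _ (sume_ge0 _ _)) ?ltNy0 // => t' _.
by rewrite mule_ge0 ?lee_fin ?P_ge0 ?ExpRew_ge0.
Qed.

Lemma fin_ExpRew (sg : {ffun S -> A}) x : is_strat P sg -> ExpRew P T rew sg x < +oo ->
  ExpRew P T rew sg x = (fine (ExpRew P T rew sg x))%:E.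
Proof. by move=> Hsg H; rewrite fineK // ge0_fin_numE ?ExpRew_ge0. Qed.

Lemma maxprin (sg' : {ffun S -> A}) : is_strat P sg' -> forall v : S -> \bar R,
  (forall t, t \in T -> v t <= 0) ->
  (forall t, ExpRew P T rew sg' t < +oo -> v t \is a fin_num) ->
  (forall t, t \notin T -> ExpRew P T rew sg' t < +oo ->
     v t <= (rew t)%:E + \sum_(t' | t' \in Post P t (sg' t)) (P t (sg' t) t')%:E * v t') ->
  forall t, v t <= ExpRew P T rew sg' t.
Proof.
move=> Hsg' v vT vfin vle.
pose u := ExpRew P T rew sg'.
pose d t := (fine (v t) - fine (u t))%R.
pose Hu := [pred x | u x < +oo].
move=> t; case: (ltP (u t) +oo) => Ht; last by apply: le_trans Ht; apply: leey.
rewrite leNgt; apply/negP => Hlt.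
have Hut : Hu t by rewrite inE.
case: (arg_maxP d Hut) => x0 Hx0 Hmax.
have dt : (0 < d t)%R.
  move: Hlt; rewrite /d (fin_ExpRew Hsg' Ht) -(fineK (vfin t Ht)) lte_fin.
  by rewrite subr_gt0.
pose m := d x0.
have m0 : (0 < m)%R by apply: lt_le_trans dt (Hmax t Hut).
have Hstep x : Hu x -> x \notin T ->
    (d x <= \sum_(y | y \in Post P x (sg' x)) P x (sg' x) y * d y)%R.
  rewrite inE => Hx xT.
  have Hsy y : y \in Post P x (sg' x) -> u y < +oo by apply: ExpRew_succ.
  have E1 : u x = (rew x + \sum_(y | y \in Post P x (sg' x)) P x (sg' x) y * fine (u y))%:E.
    rewrite /u ExpRew_step // EFinD -sumEFin; congr (_ + _); apply: eq_bigr => y Py.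
    by rewrite EFinM -fin_ExpRew // Hsy.
  have E2 : v x <= (rew x + \sum_(y | y \in Post P x (sg' x)) P x (sg' x) y * fine (v y))%:E.
    apply: (le_trans (vle x xT Hx)); rewrite EFinD -sumEFin; apply: leeD2l.
    apply: lee_sum => y Py; rewrite EFinM fineK //; apply: vfin; exact: Hsy.
  have E2' : (fine (v x) <= rew x + \sum_(y | y \in Post P x (sg' x)) P x (sg' x) y * fine (v y))%R.
    by rewrite -lee_fin fineK ?vfin.
  rewrite /d E1 /=.
  rewrite (_ : (\sum_(y | y \in Post P x (sg' x)) P x (sg' x) y * (fine (v y) - fine (u y)) =
     \sum_(y | y \in Post P x (sg' x)) P x (sg' x) y * fine (v y) -
     \sum_(y | y \in Post P x (sg' x)) P x (sg' x) y * fine (u y))%R); last first.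
    by rewrite -sumrB; apply: eq_bigr => y _; rewrite mulrBr.
  lra.
have Hsucc x y : Hu x -> x \notin T -> y \in Post P x (sg' x) -> Hu y.
  by rewrite !inE => Hx xT Py; exact: (ExpRew_succ Hsg' xT Hx Py).
pose M := [pred x | Hu x && (d x == m)].
have MT x : M x -> x \notin T.
  case/andP => Hx /eqP dx; apply/negP => xT.
  have : (d x <= 0)%R.
    rewrite /d /u ExpRew_T //= subr0 -lee_fin fineK ?vT //.
    by apply: vfin; rewrite /u ExpRew_T.
  by rewrite dx leNgt m0.
have Mcl x y : M x -> (0 < P x (sg' x) y)%R -> M y.
  move=> Mx Py; have xT := MT x Mx; case/andP: Mx => Hx /eqP dx.
  have Hs : sg' x \in Act P x by have := forallP Hsg' x.
  have Hle z : z \in Post P x (sg' x) -> (d z <= m)%R.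
    by move=> Pz; apply: Hmax; apply: Hsucc Pz.
  have := @avg_le S (Post P x (sg' x)) (P x (sg' x)) d m (fun i Hi => @Post_gt0 sg' x i Hi) (sum_Post1 Hs) Hle.
  rewrite -dx (Hstep x Hx xT) => /(_ isT y Py) dy.
  by rewrite inE (Hsucc x y Hx xT Py) dy dx eqxx.
have Mx0 : M x0 by rewrite inE Hx0 eqxx.
have := closed_zero Hsg' MT Mcl Mx0.
by rewrite (ExpRew_fin Hsg' Hx0) => /eqP; rewrite oner_eq0.
Qed.

Lemma PrMin_le (sg : {ffun S -> A}) s : is_strat P sg -> PrMin P T s <= (Prr sg s)%:E.
Proof. move=> Hsg; rewrite -(PeE Hsg) -(PrReachE sg s); exact: bigmin_le_cond. Qed.

Lemma PrMin_T s : s \in T -> 0 < PrMin P T s.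
Proof.
move=> sT; apply: (@lt_le_trans _ _ 1); first by rewrite lte_fin ltr01.
apply: le_bigmin; first by rewrite leey.
by move=> sg Hsg; rewrite PrReachE (PeE Hsg) (Prr_T Hsg sT).
Qed.

Lemma sum_Post_fin (F : S -> R) s a :
  (\sum_(t | t \in Post P s a) (P s a t)%:E * (F t)%:E = (\sum_(t | t \in Post P s a) P s a t * F t)%:E)%E.
Proof. by rewrite -sumEFin; apply: eq_bigr => t _; rewrite EFinM. Qed.

Lemma sum_oo (I : finType) (D : pred I) (F : I -> \bar R) j :
  D j -> (forall i, D i -> 0 <= F i) -> F j = +oo -> \sum_(i | D i) F i = +oo.
Proof.
move=> Dj F0 Fj; rewrite (bigD1 j) //= Fj addye //.
rewrite gt_eqF // (lt_le_trans _ (sume_ge0 _ _)) ?ltNy0 // => i /andP[Di _]; exact: F0.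
Qed.

Lemma bound_a (y : S -> \bar R) : (forall s, 0 <= y s) -> Etilde_op P T rew y = y ->
  forall sg, is_strat P sg -> forall t, ExpRew P T rew sg t <= y t.
Proof.
move=> y0 Hfix sg Hsg.
have Hy t : y t < +oo -> 0 < PrMin P T t.
  move=> Ht; move: Hfix => /(congr1 (fun f => f t)); rewrite /Etilde_op.
  by case: ifP => // _ Hy; rewrite -Hy ltxx in Ht.
have Hya t : t \notin T -> y t < +oo ->
    (rew t)%:E + \sum_(t' | t' \in Post P t (sg t)) (P t (sg t) t')%:E * y t' <= y t.
  move=> tT Ht; rewrite -{2}Hfix /Etilde_op (Hy t Ht) /Emax_op (negbTE tT) leeD2l //.
  have Hs : sg t \in Act P t by have := forallP Hsg t.
  exact: (@le_bigmax_cond _ _ _ -oo (sg t) (fun a => a \in Act P t) (fun a => \sum_(s' in Post P t a) ((P t a s')%:E * y s'))%E Hs).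
have Hsucc t t' : t \notin T -> y t < +oo -> (0 < P t (sg t) t')%R -> y t' < +oo.
  move=> tT Ht Pt; case: (ltP (y t') +oo) => // Hy'.
  have Hy'' : y t' = +oo by apply/eqP; rewrite eq_le leey Hy'.
  have := Hya t tT Ht.
  rewrite (@sum_oo S (Post P t (sg t)) _ t') //.
  - by rewrite addey // leye_eq => /eqP E; rewrite E ltxx in Ht.
  - by move=> i _; rewrite mule_ge0 ?lee_fin ?P_ge0 ?y0.
  - by rewrite Hy'' muleC gt0_mulye ?lte_fin.
pose Fy := [pred t | y t < +oo].
have HPr t : Fy t -> Prr sg t = 1%R.
  move=> Ft; apply/eqP; rewrite eq_le (Prr_le1 Hsg) /= leNgt; apply/negP => Hlt.
  pose X := [pred x | Fy x && (Prr sg x < 1)%R].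
  have Xt : X t by rewrite inE Ft Hlt.
  case: (arg_minP (Prr sg) Xt) => x0 /andP[Fx0 Hx0] Hmin.
  pose m := Prr sg x0.
  pose M := [pred x | Fy x && (Prr sg x == m)].
  have MT x : M x -> x \notin T.
    case/andP => _ /eqP H; apply/negP => xT; move: Hx0; by rewrite -/m -H Prr_T // ltxx.
  have Mcl x x' : M x -> (0 < P x (sg x) x')%R -> M x'.
    move=> Mx Px'; have xT := MT x Mx; case/andP: Mx => Fx /eqP H.
    have Hs : sg x \in Act P x by have := forallP Hsg x.
    have Hge z : z \in Post P x (sg x) -> (m <= Prr sg z)%R.
      move=> Pz; case: (ltP (Prr sg z) 1%R) => Hz.
        apply: Hmin; rewrite inE Hz andbT; exact: (Hsucc x z xT Fx Pz).
      by apply: le_trans Hz; apply: ltW.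
    have := @avg_ge S (Post P x (sg x)) (P x (sg x)) (Prr sg) m (fun i Hi => @Post_gt0 sg x i Hi) (sum_Post1 Hs) Hge.
    rewrite -(Prr_recP Hsg xT) H lexx => /(_ isT x' Px') Hx'.
    by apply/andP; split; [exact: (Hsucc x x' xT Fx Px') | rewrite Hx'].

  have Mx0 : M x0 by rewrite inE Fx0 eqxx.
  have Z := closed_zero Hsg MT Mcl Mx0.
  by have := lt_le_trans (Hy x0 Fx0) (PrMin_le x0 Hsg); rewrite Z ltxx.
have HRR n t : (RR sg n t)%:E <= y t.
  elim: n t => [|n IH] t; first by rewrite RR0 y0.
  case: (boolP (t \in T)) => tT; first by rewrite RR_rec tT y0.
  case: (ltP (y t) +oo) => Ht; last by apply: le_trans Ht; apply: leey.
  apply: le_trans (Hya t tT Ht).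
  apply: (le_trans (y := (rew t + Lop sg (RR sg n) t)%:E)); first by rewrite lee_fin RR_step.
  rewrite /Lop (negbTE tT) sum_Post EFinD leeD2l // -sum_Post_fin.
  by apply: lee_sum => t' _; apply: lee_wpmul2l; rewrite ?lee_fin ?P_ge0 ?IH.
move=> t; case: (ltP (y t) +oo) => Ht; last by apply: le_trans Ht; apply: leey.
rewrite ExpRew_eq1 ?HPr //.
by apply: ge_ereal_sup => _ [n _ <-].
Qed.

Lemma strat_exists : exists sg : {ffun S -> A}, is_strat P sg.
Proof.
case: HP => _ _ H.
have [f Hf] := choice H.
exists [ffun s => f s]; apply/forallP => s; rewrite ffunE inE; apply/eqP; exact: Hf.
Qed.

Definition le_str (s1 s2 : {ffun S -> A}) : bool :=
  [forall t, ExpRew P T rew s1 t <= ExpRew P T rew s2 t].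

Definition cnt (s : {ffun S -> A}) : nat :=
  #|[pred s1 | is_strat P s1 && le_str s1 s]|.

Lemma maximal_exists : exists sgm : {ffun S -> A}, is_strat P sgm /\
  forall sg', is_strat P sg' -> (forall t, ExpRew P T rew sgm t <= ExpRew P T rew sg' t) ->
    forall t, ExpRew P T rew sg' t <= ExpRew P T rew sgm t.
Proof.
have [sg0 Hsg0] := strat_exists.
case: (arg_maxnP cnt Hsg0) => sgm Hsgm Hmax.
exists sgm; split => // sg' Hsg' Hle t; rewrite leNgt; apply/negP => Hlt.
have : (cnt sgm < cnt sg')%N.
  apply: proper_card; apply/properP; split.
    apply/fintype.subsetP => s1; rewrite !inE => /andP[H0 /forallP H1]; rewrite H0 /=.
    by apply/forallP => x; apply: le_trans (H1 x) (Hle x).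
  exists sg'; first by rewrite inE Hsg'; apply/forallP => x.
  by rewrite inE Hsg' /= negb_forall; apply/existsP; exists t; rewrite -ltNge.
move=> H; have := Hmax _ Hsg'.
by move=> /=; rewrite leqNgt H.
Qed.

Lemma Z_infty (sgm : {ffun S -> A}) : is_strat P sgm ->
  (forall sg', is_strat P sg' -> (forall t, ExpRew P T rew sgm t <= ExpRew P T rew sg' t) ->
    forall t, ExpRew P T rew sg' t <= ExpRew P T rew sgm t) ->
  forall s, ~~ (0 < PrMin P T s) -> ExpRew P T rew sgm s = +oo.
Proof.
move=> Hsgm Hmax s Hs.
case: (arg_minP (fun i => PrReach P T i s) Hsgm) => sgs Hsgs Hmin.
have HPs : Prr sgs s = 0%R.
  have H1 : PrMin P T s <= PrReach P T sgs s by apply: bigmin_le_cond.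
  have H2 : PrReach P T sgs s <= PrMin P T s.
    by apply: le_bigmin; [apply: leey | exact: Hmin].
  have : PrMin P T s = (Prr sgs s)%:E by rewrite -(PeE Hsgs) -PrReachE; apply/eqP; rewrite eq_le H1 H2.
  move: Hs; rewrite -leNgt => Hs E; apply/eqP; rewrite eq_le (Prr_ge0 Hsgs) andbT -lee_fin -E //.
pose D := [pred t | Prr sgs t == 0%R].
have DT t : D t -> t \notin T.
  by rewrite inE => /eqP H; apply/negP => tT; move: H; rewrite (Prr_T Hsgs tT) => /eqP; rewrite oner_eq0.
have Dcl t t' : D t -> (0 < P t (sgs t) t')%R -> D t'.
  move=> Dt Pt; have tT := DT t Dt; move: Dt; rewrite inE => /eqP H.
  have Hs' : sgs t \in Act P t by have := forallP Hsgs t.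
  have := @avg_ge S (Post P t (sgs t)) (P t (sgs t)) (Prr sgs) 0%R (fun i Hi => @Post_gt0 sgs t i Hi) (sum_Post1 Hs') (fun i _ => Prr_ge0 Hsgs i).
  rewrite -(Prr_recP Hsgs tT) H lexx => /(_ isT t' Pt) Ht'; by rewrite inE Ht'.
pose sg' := [ffun t => if D t then sgs t else sgm t].
have Hsg' : is_strat P sg'.
  apply/forallP => t; rewrite ffunE; case: (D t); [exact: (forallP Hsgs t) | exact: (forallP Hsgm t)].
have Hu'D t : D t -> ExpRew P T rew sg' t = +oo.
  move=> Dt; apply: (ExpRew_lt1 Hsg').
  rewrite (@closed_zero sg' Hsg' D) ?ltr01 // => x x' Dx; rewrite ffunE Dx; exact: Dcl.
pose Hu := [pred t | ExpRew P T rew sg' t < +oo].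
have Heq t : Hu t -> ExpRew P T rew sgm t = ExpRew P T rew sg' t.
  apply: (@loc_ExpRew sgm sg' Hu) => [x Hx|x x' Hx xT Px].
    rewrite ffunE; case: ifP => // Dx; move: Hx; by rewrite inE Hu'D // ltxx.
  exact: (ExpRew_succ Hsg' xT Hx).
have Hle t : ExpRew P T rew sgm t <= ExpRew P T rew sg' t.
  case: (ltP (ExpRew P T rew sg' t) +oo) => Ht; first by rewrite Heq.
  by apply: le_trans Ht; apply: leey.
have := Hmax sg' Hsg' Hle s.
by rewrite Hu'D ?inE ?HPs // leye_eq => /eqP.
Qed.

Lemma fix_v (sgm : {ffun S -> A}) (Hsgm : is_strat P sgm)
  (Hmax : forall sg', is_strat P sg' -> (forall t, ExpRew P T rew sgm t <= ExpRew P T rew sg' t) ->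
    forall t, ExpRew P T rew sg' t <= ExpRew P T rew sgm t) :
  Etilde_op P T rew (ExpRew P T rew sgm) = ExpRew P T rew sgm.
Proof.
apply: funext => t; rewrite /Etilde_op.
case: ifP => Hpos; last by rewrite Z_infty // Hpos.
rewrite /Emax_op; case: (boolP (t \in T)) => tT; first by rewrite ExpRew_T.
set v := ExpRew P T rew sgm.
have Hs : sgm t \in Act P t by have := forallP Hsgm t.
apply/eqP; rewrite eq_le; apply/andP; split; last first.
  rewrite {1}/v ExpRew_step //; apply: leeD2l.
  exact: (@le_bigmax_cond _ _ _ -oo (sgm t) (fun a => a \in Act P t) (fun a => \sum_(s' in Post P t a) ((P t a s')%:E * v s'))%E Hs).
case: (ltP (v t) +oo) => Hvt; last by apply: le_trans Hvt; apply: leey.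
have Hvfin : v t \is a fin_num by rewrite ge0_fin_numE ?ExpRew_ge0.
rewrite -leeBrDl //; apply: bigmax_le; first by rewrite leNye.
move=> a Ha; rewrite leeBrDl //.
rewrite leNgt; apply/negP => Hlt.
pose sg' := [ffun x => if x == t then a else sgm x].
have Hsg' : is_strat P sg'.
  apply/forallP => x; rewrite ffunE; case: eqP => [->|_] //; exact: (forallP Hsgm x).
set u := ExpRew P T rew sg'.
have Prt : Prr sgm t = 1%R by apply: (ExpRew_fin Hsgm).
have Hoo x : ~~ (v x < +oo) -> u x = +oo.
  move=> Hx; apply: (ExpRew_lt1 Hsg').
  have Hx1 : (Prr sgm x < 1)%R.
    rewrite lt_neqAle (Prr_le1 Hsgm) andbT; apply: contra Hx => /eqP H.
    by rewrite /v ExpRew_finP // H.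
  apply: (switch_lt1 Hsgm Hsg') Hx1 => y Hy; rewrite ffunE; case: eqP => // E.
  by move: Hy; rewrite E Prt ltxx.
have Hle x : v x <= u x.
  apply: (maxprin Hsg' (v := v)) => {x} [x xT|x Hx|x xT Hx].
  - by rewrite /v ExpRew_T.
  - rewrite ge0_fin_numE ?ExpRew_ge0 //; case: (boolP (v x < +oo)) => // /Hoo.
    by move: Hx; rewrite -/u => /[swap] ->; rewrite ltxx.
  - rewrite ffunE; case: eqP => [->|_]; first exact: ltW.
    by rewrite /v ExpRew_step.
have Hge := Hmax sg' Hsg' Hle.
have Huv x : u x = v x by apply/eqP; rewrite eq_le Hge Hle.
have := ExpRew_step Hsg' tT; rewrite ffunE eqxx -/u Huv.
under eq_bigr => x _ do rewrite Huv.
by move=> E; move: Hlt; rewrite -E ltxx.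
Qed.

Lemma main_lfp : is_lfp (Etilde_op P T rew) (fun s => EMax P T rew s).
Proof.
have [sgm [Hsgm Hmax]] := maximal_exists.
have Hfix := fix_v Hsgm Hmax.
have HE t : EMax P T rew t = ExpRew P T rew sgm t.
  apply/eqP; rewrite eq_le; apply/andP; split.
    apply: bigmax_le; first by rewrite leNye.
    move=> sg Hsg; apply: bound_a => //; exact: ExpRew_ge0.
  exact: (@le_bigmax_cond _ _ _ -oo sgm (fun sg => is_strat P sg) (fun sg => ExpRew P T rew sg t) Hsgm).
have -> : (fun s => EMax P T rew s) = ExpRew P T rew sgm by apply: funext => t; exact: HE.
split => //; first by move=> s; exact: ExpRew_ge0.
move=> y y0 Hy s; rewrite -HE.
apply: bigmax_le; first by rewrite leNye.
move=> sg Hsg; exact: bound_a.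
Qed.

End Dev.

Unset Implicit Arguments.

Theorem lemma7 (R : realType) (S A : finType) (P : S -> A -> S -> R)
  (T : {set S}) (rew : S -> R) :
  is_mdp P -> (forall s, 0 <= rew s) ->
  is_lfp (Etilde_op P T rew) (fun s => EMax P T rew s).
Proof.
move=> HP Hrew; exact: (@main_lfp R S A P T rew HP Hrew).
Qed.
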